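(* Fix real parameters $\ell>0$, $\ell_0\in(0,\ell)$, $\rho>0$, $EI>0$, $m>0$, $\varkappa>0$, $d>0$. Let $s\in\mathbb{C}\setminus\{0\}$ be such that the $4\times4$ matrix $\tilde M=\tilde M(s)$ defined in the context is invertible; write $\tilde M^{-1}=(\tilde M^{-1}_{ij})_{i,j=1}^4$. Let $U\in\mathbb{C}$. Suppose $W:[0,\ell]\to\mathbb{C}$ has restrictions to $[0,\ell_0]$ and $[\ell_0,\ell]$ that are four times continuously differentiable (derivatives at $\ell_0$ one-sided, denoted by arguments $\ell_0\mp 0$), satisfying on $(0,\ell_0)$ and $(\ell_0,\ell)$ $$s^2W(x)+\frac{EI}{\rho}W^{(4)}(x)=0,$$ the boundary conditions $W(0)=W(\ell)=0$, $W''(0)=W''(\ell)=0$, and the interface conditions $W^{(j)}(\ell_0-0)=W^{(j)}(\ell_0+0)$ for $j=0,1,2$ and $$(ms^2+ds+\varkappa)W(\ell_0)=EI\big(W'''(\ell_0-0)-W'''(\ell_0+0)\big)+U.$$ Then for every $\ell_k\in[0,\ell]$ one has $W(\ell_k)=\tilde H_1(s)U$ and $W''(\ell_k)=\tilde H_2(s)U$, where $$\tilde H_1(s)=\begin{cases}\frac1{EI}\Big(\tilde z_2(\ell_k,s)\tilde M^{-1}_{14}+\tilde z_4(\ell_k,s)\tilde M^{-1}_{24}\Big),&\ell_k\in[0,\ell_0],\\[4pt] \frac1{EI}\Big(\tilde z_2(\ell_k-\ell,s)\tilde M^{-1}_{34}+\tilde z_4(\ell_k-\ell,s)\tilde M^{-1}_{44}\Big),&\ell_k\in(\ell_0,\ell],\end{cases}$$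 $$\tilde H_2(s)=\begin{cases}\frac1{EI}\Big(\gamma^4\tilde z_4(\ell_k,s)\tilde M^{-1}_{14}+\tilde z_2(\ell_k,s)\tilde M^{-1}_{24}\Big),&\ell_k\in[0,\ell_0],\\[4pt] \frac1{EI}\Big(\gamma^4\tilde z_4(\ell_k-\ell,s)\tilde M^{-1}_{34}+\tilde z_2(\ell_k-\ell,s)\tilde M^{-1}_{44}\Big),&\ell_k\in(\ell_0,\ell].\end{cases}$$ That is, $\tilde H_1,\tilde H_2$ are the transfer functions of the damped Euler–Bernoulli beam with attached mass, with outputs $w(\ell_k,t)$ and $w''(\ell_k,t)$.
   Context: This is the Laplace transform (zero initial data, Laplace variable $s$) of the simply supported Euler–Bernoulli beam $\ddot w+\frac{EI}{\rho}w^{(4)}=0$ on $[0,\ell]$ with $w=w''=0$ at $x=0,\ell$, continuity of $w,w',w''$ at $\ell_0$, and $(m\ddot w+\varkappa w+d\dot w)|_{x=\ell_0}=EI(w'''|_{\ell_0-0}-w'''|_{\ell_0+0})+F_0$; $W,U$ are the Laplace transforms of $w,F_0$. Parameters: $\rho$ linear density, $EI$ bending stiffness, $m$ attached mass, $\varkappa$ spring stiffness, $d$ damping coefficient. Notation: $\gamma$ is the principal value of $\sqrt[4]{-\rho s^2/(EI)}$, so $\gamma^4=-\rho s^2/(EI)$. For $x\in\mathbb{R}$: $\tilde z_1(x,s)=\cosh\gamma x+\cos\gamma x$, $\tilde z_2(x,s)=\frac1\gamma(\sinh\gamma x+\sin\gamma x)$, $\tilde z_3(x,s)=\frac1{\gamma^2}(\cosh\gamma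 x-\cos\gamma x)$, $\tilde z_4(x,s)=\frac1{\gamma^3}(\sinh\gamma x-\sin\gamma x)$. Let $\tilde v=\frac{ms^2+ds+\varkappa}{EI}$ and write $\tilde z_j^0=\tilde z_j(\ell_0,s)$, $\tilde z_j^-=\tilde z_j(\ell_0-\ell,s)$. The matrix $\tilde M$ has rows Row 1: $\big(\tilde z_2^0,\;\tilde z_4^0,\;-\tilde z_2^-,\;-\tilde z_4^-\big)$; Row 2: $\big(\tilde z_1^0,\;\tilde z_3^0,\;-\tilde z_1^-,\;-\tilde z_3^-\big)$; Row 3: $\big(\gamma^4\tilde z_4^0,\;\tilde z_2^0,\;-\gamma^4\tilde z_4^-,\;-\tilde z_2^-\big)$; Row 4: $\big(\tilde v\tilde z_2^0-\gamma^4\tilde z_3^0,\;\tilde v\tilde z_4^0-\tilde z_1^0,\;\gamma^4\tilde z_3^-,\;\tilde z_1^-\big)$. *)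

(* Defs.v *)
From Stdlib Require Import Reals.
From Coquelicot Require Import Coquelicot.

Open Scope C_scope.

Definition Cexp (z : C) : C :=
  (exp (Re z) * cos (Im z), exp (Re z) * sin (Im z))%R.
Definition Ccosh (z : C) : C := (Cexp z + Cexp (- z)) / 2.
Definition Csinh (z : C) : C := (Cexp z - Cexp (- z)) / 2.
Definition Ccos (z : C) : C := (Cexp (Ci * z) + Cexp (- (Ci * z))) / 2.
Definition Csin (z : C) : C := (Cexp (Ci * z) - Cexp (- (Ci * z))) / (2 * Ci).

(** Principal square root (argument in (-pi/2, pi/2]). *)
Definition Csqrt (z : C) : C :=
  (sqrt ((Cmod z + Re z) / 2),
   if Rle_dec 0 (Im z) then sqrt ((Cmod z - Re z) / 2)
   else - sqrt ((Cmod z - Re z) / 2))%R.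

(** Principal fourth root (argument in (-pi/4, pi/4]). *)
Definition Croot4 (z : C) : C := Csqrt (Csqrt z).

Definition gam (rho EI : R) (s : C) : C :=
  Croot4 (- (RtoC rho * (s * s)) / RtoC EI).

Definition zt1 (g : C) (x : R) : C := Ccosh (g * x) + Ccos (g * x).
Definition zt2 (g : C) (x : R) : C := (Csinh (g * x) + Csin (g * x)) / g.
Definition zt3 (g : C) (x : R) : C := (Ccosh (g * x) - Ccos (g * x)) / (g * g).
Definition zt4 (g : C) (x : R) : C := (Csinh (g * x) - Csin (g * x)) / (g * g * g).

Definition Mt (l l0 rho EI m kap d : R) (s : C) (i j : nat) : C :=
  let g := gam rho EI s in
  let g4 := Cpow g 4 in
  let v := (RtoC m * (s * s) + RtoC d * s + RtoC kap) / RtoC EI in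
  let x0 := l0 in
  let xm := (l0 - l)%R in
  match i, j with
  | 1%nat, 1%nat => zt2 g x0 | 1%nat, 2%nat => zt4 g x0 | 1%nat, 3%nat => - zt2 g xm | 1%nat, 4%nat => - zt4 g xm
  | 2%nat, 1%nat => zt1 g x0 | 2%nat, 2%nat => zt3 g x0 | 2%nat, 3%nat => - zt1 g xm | 2%nat, 4%nat => - zt3 g xm
  | 3%nat, 1%nat => g4 * zt4 g x0 | 3%nat, 2%nat => zt2 g x0 | 3%nat, 3%nat => - (g4 * zt4 g xm) | 3%nat, 4%nat => - zt2 g xm
  | 4%nat, 1%nat => v * zt2 g x0 - g4 * zt3 g x0 | 4%nat, 2%nat => v * zt4 g x0 - zt1 g x0
  | 4%nat, 3%nat => g4 * zt3 g xm | 4%nat, 4%nat => zt1 g xm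
  | _, _ => 0
  end.

(** 4x4 matrices as functions on indices 1..4. *)
Definition mul4 (A B : nat -> nat -> C) (i j : nat) : C :=
  A i 1%nat * B 1%nat j + A i 2%nat * B 2%nat j + A i 3%nat * B 3%nat j + A i 4%nat * B 4%nat j.

Definition is_inverse4 (A B : nat -> nat -> C) : Prop :=
  forall i j : nat, (1 <= i <= 4)%nat -> (1 <= j <= 4)%nat ->
    mul4 A B i j = (if Nat.eqb i j then 1 else 0) /\
    mul4 B A i j = (if Nat.eqb i j then 1 else 0).

Definition is_derive_within (a b : R) (f : R -> C) (x : R) (l : C) : Prop :=
  filterlim (fun y => (f y - f x) / RtoC (y - x))
    (within (fun y => a <= y <= b /\ y <> x)%R (locally x)) (locally l).

Definition continuous_within (a b : R) (f : R -> C) (x : R) : Prop :=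
  filterlim f (within (fun y => a <= y <= b)%R (locally x)) (locally (f x)).

(** f restricted to [a,b] is n times continuously differentiable, and
    D k is its k-th derivative on [a,b] (one-sided at a and b). *)
Definition Cn_on (n : nat) (a b : R) (f : R -> C) (D : nat -> R -> C) : Prop :=
  (forall x, (a <= x <= b)%R -> D O x = f x) /\
  (forall k x, (k < n)%nat -> (a <= x <= b)%R -> is_derive_within a b (D k) x (D (S k) x)) /\
  (forall x, (a <= x <= b)%R -> continuous_within a b (D n) x).

Definition Ht1 (l l0 rho EI : R) (s : C) (Minv : nat -> nat -> C) (lk : R) : C :=
  let g := gam rho EI s in
  if Rle_dec lk l0 then
    / RtoC EI * (zt2 g lk * Minv 1%nat 4%nat + zt4 g lk * Minv 2%nat 4%nat)
  else
    / RtoC EI * (zt2 g (lk - l)%R * Minv 3%nat 4%nat + zt4 g (lk - l)%R * Minv 4%nat 4%nat).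

Definition Ht2 (l l0 rho EI : R) (s : C) (Minv : nat -> nat -> C) (lk : R) : C :=
  let g := gam rho EI s in
  if Rle_dec lk l0 then
    / RtoC EI * (Cpow g 4 * zt4 g lk * Minv 1%nat 4%nat + zt2 g lk * Minv 2%nat 4%nat)
  else
    / RtoC EI * (Cpow g 4 * zt4 g (lk - l)%R * Minv 3%nat 4%nat
                 + zt2 g (lk - l)%R * Minv 4%nat 4%nat).

(* Main.v *)
Require Import Defs.
From Stdlib Require Import Reals Lra Lia.
From Coquelicot Require Import Coquelicot.
Open Scope C_scope.

Lemma Cdiv_RtoC_fst z r : r <> 0%R -> fst (z / RtoC r) = (fst z / r)%R.
Proof. intros H. destruct z as [z1 z2]. unfold Cdiv, Cinv, Cmult, RtoC. simpl. field. auto. Qed.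
Lemma Cdiv_RtoC_snd z r : r <> 0%R -> snd (z / RtoC r) = (snd z / r)%R.
Proof. intros H. destruct z as [z1 z2]. unfold Cdiv, Cinv, Cmult, RtoC. simpl. field. auto. Qed.

Lemma ball_C (l z : C) (e : R) : ball l e z <-> (Rabs (fst z - fst l) < e /\ Rabs (snd z - snd l) < e)%R.
Proof. destruct l, z. unfold ball. simpl. unfold prod_ball. simpl. unfold AbsRing_ball, abs, minus, plus, opp. simpl. tauto. Qed.

Lemma ball_R (l z : R) (e : R) : ball l e z <-> (Rabs (z - l) < e)%R.
Proof. unfold ball. simpl. unfold AbsRing_ball, abs, minus, plus, opp. simpl. tauto. Qed.

Lemma dw_of_components (a b:R) f x l :
  derivable_pt_lim (fun y => fst (f y)) x (fst l) ->
  derivable_pt_lim (fun y => snd (f y)) x (snd l) -> is_derive_within a b f x l.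
Proof.
  intros H1 H2 P [eps HP].
  destruct (H1 eps (cond_pos eps)) as [d1 Hd1].
  destruct (H2 eps (cond_pos eps)) as [d2 Hd2].
  assert (Hd : (0 < Rmin d1 d2)%R) by (apply Rmin_pos; apply cond_pos).
  exists (mkposreal _ Hd). intros y Hy [_ Hyx]. change R in y. apply HP.
  apply ball_R in Hy. simpl in Hy.
  apply ball_C.
  assert (Hh : (y - x <> 0)%R) by (intro; apply Hyx; lra).
  rewrite Cdiv_RtoC_fst, Cdiv_RtoC_snd by auto.
  specialize (Hd1 (y - x)%R Hh). specialize (Hd2 (y - x)%R Hh).
  replace (x + (y - x))%R with y in Hd1, Hd2 by ring.
  assert (Rmin d1 d2 <= d1)%R by apply Rmin_l.
  assert (Rmin d1 d2 <= d2)%R by apply Rmin_r.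
  pose proof (proj1 (ball_R x y _) Hy) as Hy'. simpl in Hy'.
  split; [apply Hd1|apply Hd2]; lra.
Qed.

Lemma components_of_dw (a b:R) f x l : (a < x < b)%R -> is_derive_within a b f x l ->
  derivable_pt_lim (fun y => fst (f y)) x (fst l) /\
  derivable_pt_lim (fun y => snd (f y)) x (snd l).
Proof.
  intros Hx H.
  assert (K : forall eps : posreal, exists d : posreal, forall h, h <> 0%R -> (Rabs h < d)%R ->
     (Rabs ((fst (f (x+h)) - fst (f x))/h - fst l) < eps /\ Rabs ((snd (f (x+h)) - snd (f x))/h - snd l) < eps)%R).
  { intros eps.
    destruct (H (ball l eps) (locally_ball l eps)) as [d Hd].
    assert (Hd' : (0 < Rmin d (Rmin (x - a) (b - x)))%R).
    { apply Rmin_pos; [apply cond_pos| apply Rmin_pos; lra]. }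
    exists (mkposreal _ Hd'). intros h Hh Hhd. simpl in Hhd.
    assert (Rmin d (Rmin (x - a) (b - x)) <= d)%R by apply Rmin_l.
    assert (Rmin d (Rmin (x - a) (b - x)) <= Rmin (x - a) (b - x))%R by apply Rmin_r.
    assert (Rmin (x - a) (b - x) <= x - a)%R by apply Rmin_l.
    assert (Rmin (x - a) (b - x) <= b - x)%R by apply Rmin_r.
    assert (HB : ball x d (x + h)%R). { apply ball_R. replace (x + h - x)%R with h by ring. lra. }
    assert (Hin : (a <= x + h <= b /\ x + h <> x)%R).
    { apply Rabs_def2 in Hhd. lra. }
    specialize (Hd _ HB Hin). pose proof (proj1 (ball_C _ _ _) Hd) as Hd2.
    rewrite Cdiv_RtoC_fst, Cdiv_RtoC_snd in Hd2 by lra.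
    replace (x + h - x)%R with h in Hd2 by ring. exact Hd2. }
  split; intros eps Heps; destruct (K (mkposreal _ Heps)) as [d Hd]; exists d;
    intros h Hh1 Hh2; apply (Hd h Hh1 Hh2).
Qed.

Lemma dw_ext a b f g x l : (forall y, f y = g y) -> is_derive_within a b f x l -> is_derive_within a b g x l.
Proof. intros E H. unfold is_derive_within in *. eapply filterlim_ext; [|exact H]. intros y. simpl. rewrite !E. reflexivity. Qed.

Lemma dw_plus a b f g x l1 l2 : is_derive_within a b f x l1 -> is_derive_within a b g x l2 ->
  is_derive_within a b (fun y => f y + g y) x (l1 + l2).
Proof.
  intros Hf Hg. unfold is_derive_within in *.
  eapply filterlim_ext.
  2: { eapply filterlim_comp_2; [exact Hf | exact Hg | apply (@filterlim_plus C_AbsRing C_NormedModule)]. }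
  intros y. simpl. unfold plus; simpl. unfold Cdiv. ring.
Qed.

Lemma dw_scal a b p f x l : is_derive_within a b f x l ->
  is_derive_within a b (fun y => p * f y) x (p * l).
Proof.
  intros Hf. unfold is_derive_within in *.
  eapply filterlim_ext.
  2: { eapply filterlim_comp_2; [apply (@filterlim_const _ (AbsRing_UniformSpace C_AbsRing)) | exact Hf | apply (@filterlim_scal C_AbsRing C_NormedModule)]. apply within_filter, locally_filter. }
  intros y. simpl. unfold scal; simpl. unfold mult; simpl. unfold Cdiv. ring.
Qed.

Definition ex (c : C) (sh y : R) : C := Cexp (c * RtoC (y - sh)).

Lemma ex_fst c sh y : fst (ex c sh y) = (exp (fst c * (y - sh)) * cos (snd c * (y - sh)))%R.
Proof. destruct c as [c1 c2]. unfold ex, Cexp, RtoC. simpl. replace (c1 * (y - sh) - c2 * 0)%R with (c1 * (y - sh))%R by ring; replace (c1 * 0 + c2 * (y - sh))%R with (c2 * (y - sh))%R by ring; reflexivity. Qed.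
Lemma ex_snd c sh y : snd (ex c sh y) = (exp (fst c * (y - sh)) * sin (snd c * (y - sh)))%R.
Proof. destruct c as [c1 c2]. unfold ex, Cexp, RtoC. simpl. replace (c1 * (y - sh) - c2 * 0)%R with (c1 * (y - sh))%R by ring; replace (c1 * 0 + c2 * (y - sh))%R with (c2 * (y - sh))%R by ring; reflexivity. Qed.

Lemma dw_ex a b c sh x : is_derive_within a b (ex c sh) x (c * ex c sh x).
Proof.
  apply dw_of_components.
  - apply is_derive_Reals. eapply is_derive_ext. { intros t. symmetry. apply ex_fst. }
    destruct c as [c1 c2].
    replace (fst ((c1, c2) * ex (c1, c2) sh x)) with
      (c1 * (exp (c1 * (x - sh)) * cos (c2 * (x - sh))) - c2 * (exp (c1 * (x - sh)) * sin (c2 * (x - sh))))%R.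
    2: { pose proof (ex_fst (c1,c2) sh x) as E1. pose proof (ex_snd (c1,c2) sh x) as E2. cbn [fst snd] in E1, E2. rewrite <- E1, <- E2. destruct (ex (c1, c2) sh x) as [u v]. unfold Cmult. simpl. ring. }
    auto_derive; [auto | unfold Rminus; ring].
  - apply is_derive_Reals. eapply is_derive_ext. { intros t. symmetry. apply ex_snd. }
    destruct c as [c1 c2].
    replace (snd ((c1, c2) * ex (c1, c2) sh x)) with
      (c1 * (exp (c1 * (x - sh)) * sin (c2 * (x - sh))) + c2 * (exp (c1 * (x - sh)) * cos (c2 * (x - sh))))%R.
    2: { pose proof (ex_fst (c1,c2) sh x) as E1. pose proof (ex_snd (c1,c2) sh x) as E2. cbn [fst snd] in E1, E2. rewrite <- E1, <- E2. destruct (ex (c1, c2) sh x) as [u v]. unfold Cmult. simpl. ring. }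
    auto_derive; [auto | unfold Rminus; ring].
Qed.

Ltac cexpand :=
  unfold Cmult, Cplus, Cminus, Copp, Cdiv, Cinv, Ci, RtoC; simpl;
  apply injective_projections; simpl; field.

Lemma cosh_eq g sh y : Ccosh (g * RtoC (y - sh)) = /2 * ex g sh y + /2 * ex (-g) sh y.
Proof. unfold Ccosh, ex. replace (- (g * RtoC (y - sh))) with (-g * RtoC (y - sh)) by ring.
  unfold Cdiv. ring. Qed.
Lemma sinh_eq g sh y : Csinh (g * RtoC (y - sh)) = /2 * ex g sh y + (-/2) * ex (-g) sh y.
Proof. unfold Csinh, ex. replace (- (g * RtoC (y - sh))) with (-g * RtoC (y - sh)) by ring.
  unfold Cdiv. ring. Qed.
Lemma cos_eq g sh y : Ccos (g * RtoC (y - sh)) = /2 * ex (Ci*g) sh y + /2 * ex (-(Ci*g)) sh y.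
Proof. unfold Ccos, ex. replace (Ci * (g * RtoC (y - sh))) with (Ci * g * RtoC (y - sh)) by ring.
  replace (- (Ci * g * RtoC (y - sh))) with (- (Ci * g) * RtoC (y - sh)) by ring.
  unfold Cdiv. ring. Qed.
Lemma sin_eq g sh y : Csin (g * RtoC (y - sh)) = (-Ci/2) * ex (Ci*g) sh y + (Ci/2) * ex (-(Ci*g)) sh y.
Proof. unfold Csin, ex. replace (Ci * (g * RtoC (y - sh))) with (Ci * g * RtoC (y - sh)) by ring.
  replace (- (Ci * g * RtoC (y - sh))) with (- (Ci * g) * RtoC (y - sh)) by ring.
  generalize (Cexp (Ci * g * RtoC (y - sh))) (Cexp (- (Ci * g) * RtoC (y - sh))).
  intros [u1 u2] [v1 v2]. cexpand. Qed.

Lemma dw_cosh a b g sh x : is_derive_within a b (fun y => Ccosh (g * RtoC (y - sh))) x (g * Csinh (g * RtoC (x - sh))).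
Proof.
  eapply dw_ext. { intro y. symmetry. apply cosh_eq. }
  rewrite sinh_eq.
  replace (g * (/ 2 * ex g sh x + - / 2 * ex (- g) sh x)) with (/2 * (g * ex g sh x) + /2 * (-g * ex (-g) sh x)) by ring.
  apply dw_plus; apply dw_scal; apply dw_ex.
Qed.
Lemma dw_sinh a b g sh x : is_derive_within a b (fun y => Csinh (g * RtoC (y - sh))) x (g * Ccosh (g * RtoC (x - sh))).
Proof.
  eapply dw_ext. { intro y. symmetry. apply sinh_eq. }
  rewrite cosh_eq.
  replace (g * (/ 2 * ex g sh x + / 2 * ex (- g) sh x)) with (/2 * (g * ex g sh x) + -/2 * (-g * ex (-g) sh x)) by ring.
  apply dw_plus; apply dw_scal; apply dw_ex.
Qed.
Lemma dw_cos a b g sh x : is_derive_within a b (fun y => Ccos (g * RtoC (y - sh))) x (- (g * Csin (g * RtoC (x - sh)))).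
Proof.
  eapply dw_ext. { intro y. symmetry. apply cos_eq. }
  rewrite sin_eq.
  replace (- (g * ((-Ci/2) * ex (Ci*g) sh x + (Ci/2) * ex (-(Ci*g)) sh x))) with (/2 * ((Ci*g) * ex (Ci*g) sh x) + /2 * (-(Ci*g) * ex (-(Ci*g)) sh x)).
  2: { generalize (ex (Ci*g) sh x) (ex (-(Ci*g)) sh x). destruct g as [g1 g2]. intros [u1 u2] [v1 v2]. cexpand. }
  apply dw_plus; apply dw_scal; apply dw_ex.
Qed.
Lemma dw_sin a b g sh x : is_derive_within a b (fun y => Csin (g * RtoC (y - sh))) x (g * Ccos (g * RtoC (x - sh))).
Proof.
  eapply dw_ext. { intro y. symmetry. apply sin_eq. }
  rewrite cos_eq.
  replace (g * (/2 * ex (Ci*g) sh x + /2 * ex (-(Ci*g)) sh x)) with ((-Ci/2) * ((Ci*g) * ex (Ci*g) sh x) + (Ci/2) * (-(Ci*g) * ex (-(Ci*g)) sh x)).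
  2: { generalize (ex (Ci*g) sh x) (ex (-(Ci*g)) sh x). destruct g as [g1 g2]. intros [u1 u2] [v1 v2]. cexpand. }
  apply dw_plus; apply dw_scal; apply dw_ex.
Qed.

Section Z.
Variables (a b : R) (g : C) (sh : R) (Hg : g <> 0).

Lemma dw_zt1 x : is_derive_within a b (fun y => zt1 g (y - sh)) x (Cpow g 4 * zt4 g (x - sh)).
Proof.
  eapply dw_ext. { intro y. unfold zt1. instantiate (1 := fun y => 1 * Ccosh (g * RtoC (y - sh)) + 1 * Ccos (g * RtoC (y - sh))). simpl. ring. }
  unfold zt4. simpl.
  replace (g * (g * (g * (g * 1))) * ((Csinh (g * RtoC (x - sh)) - Csin (g * RtoC (x - sh))) / (g * g * g)))
    with (1 * (g * Csinh (g * RtoC (x - sh))) + 1 * (- (g * Csin (g * RtoC (x - sh))))) by (field; auto).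
  apply dw_plus; apply dw_scal; [apply dw_cosh | apply dw_cos].
Qed.

Lemma dw_zt2 x : is_derive_within a b (fun y => zt2 g (y - sh)) x (zt1 g (x - sh)).
Proof.
  eapply dw_ext. { intro y. unfold zt2. instantiate (1 := fun y => /g * Csinh (g * RtoC (y - sh)) + /g * Csin (g * RtoC (y - sh))). simpl. field. auto. }
  unfold zt1.
  replace (Ccosh (g * RtoC (x - sh)) + Ccos (g * RtoC (x - sh)))
    with (/g * (g * Ccosh (g * RtoC (x - sh))) + /g * (g * Ccos (g * RtoC (x - sh)))) by (field; auto).
  apply dw_plus; apply dw_scal; [apply dw_sinh | apply dw_sin].
Qed.

Lemma dw_zt3 x : is_derive_within a b (fun y => zt3 g (y - sh)) x (zt2 g (x - sh)).
Proof.
  eapply dw_ext. { intro y. unfold zt3. instantiate (1 := fun y => /(g*g) * Ccosh (g * RtoC (y - sh)) + (-/(g*g)) * Ccos (g * RtoC (y - sh))). simpl. field. auto. }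
  unfold zt2.
  replace ((Csinh (g * RtoC (x - sh)) + Csin (g * RtoC (x - sh))) / g)
    with (/(g*g) * (g * Csinh (g * RtoC (x - sh))) + (-/(g*g)) * (- (g * Csin (g * RtoC (x - sh))))) by (field; auto).
  apply dw_plus; apply dw_scal; [apply dw_cosh | apply dw_cos].
Qed.

Lemma dw_zt4 x : is_derive_within a b (fun y => zt4 g (y - sh)) x (zt3 g (x - sh)).
Proof.
  eapply dw_ext. { intro y. unfold zt4. instantiate (1 := fun y => /(g*g*g) * Csinh (g * RtoC (y - sh)) + (-/(g*g*g)) * Csin (g * RtoC (y - sh))). simpl. field. auto. }
  unfold zt3.
  replace ((Ccosh (g * RtoC (x - sh)) - Ccos (g * RtoC (x - sh))) / (g * g))
    with (/(g*g*g) * (g * Ccosh (g * RtoC (x - sh))) + (-/(g*g*g)) * (g * Ccos (g * RtoC (x - sh)))) by (field; auto).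
  apply dw_plus; apply dw_scal; [apply dw_sinh | apply dw_sin].
Qed.
End Z.

Lemma Csqrt_sq z : Csqrt z * Csqrt z = z.
Proof.
  destruct z as [x y]. unfold Csqrt, Cmod, Cmult. simpl.
  replace (x * (x * 1) + y * (y * 1))%R with (x ^ 2 + y ^ 2)%R by ring.
  set (r := sqrt (x ^ 2 + y ^ 2)).
  assert (Hr : (Rabs x <= r)%R).
  { unfold r. rewrite <- sqrt_Rsqr_abs. apply sqrt_le_1_alt. unfold Rsqr. nra. }
  assert (Hr0 : (0 <= r)%R) by apply sqrt_pos.
  assert (Hrr : (r * r = x^2 + y^2)%R).
  { unfold r. rewrite sqrt_sqrt; [ring| nra]. }
  assert (H1 : (0 <= (r + x)/2)%R) by (apply Rabs_le_between in Hr; lra).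
  assert (H2 : (0 <= (r - x)/2)%R) by (apply Rabs_le_between in Hr; lra).
  assert (HA : (sqrt ((r + x)/2) * sqrt ((r + x)/2) = (r + x)/2)%R) by (apply sqrt_sqrt; auto).
  assert (HB : (sqrt ((r - x)/2) * sqrt ((r - x)/2) = (r - x)/2)%R) by (apply sqrt_sqrt; auto).
  assert (HAB : (2 * (sqrt ((r + x)/2) * sqrt ((r - x)/2)) = Rabs y)%R).
  { rewrite <- sqrt_mult by auto.
    replace ((r + x) / 2 * ((r - x) / 2))%R with (Rsqr (y/2)).
    2: { unfold Rsqr. field_simplify. nra. }
    rewrite sqrt_Rsqr_abs. unfold Rdiv. rewrite Rabs_mult. rewrite (Rabs_right (/2)) by lra. field. }
  apply injective_projections; simpl.
  - destruct (Rle_dec 0 y); nra.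
  - destruct (Rle_dec 0 y).
    + rewrite Rabs_right in HAB by lra. nra.
    + rewrite Rabs_left in HAB by lra. nra.
Qed.

Lemma gam_pow4 (rho EI : R) (s : C) : Cpow (gam rho EI s) 4 = - (RtoC rho * (s * s)) / RtoC EI.
Proof.
  unfold gam, Croot4. set (z := - (RtoC rho * (s * s)) / RtoC EI).
  simpl. rewrite Cmult_1_r.
  replace (Csqrt (Csqrt z) * (Csqrt (Csqrt z) * (Csqrt (Csqrt z) * Csqrt (Csqrt z))))
    with ((Csqrt (Csqrt z) * Csqrt (Csqrt z)) * (Csqrt (Csqrt z) * Csqrt (Csqrt z))) by ring.
  rewrite !Csqrt_sq. reflexivity.
Qed.

Lemma RtoC_neq0 r : r <> 0%R -> RtoC r <> 0.
Proof. intros H E. apply H. apply (f_equal fst) in E. simpl in E. exact E. Qed.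

Lemma gam_neq0 (rho EI : R) (s : C) : (0 < rho)%R -> (0 < EI)%R -> s <> 0 -> gam rho EI s <> 0.
Proof.
  intros Hr He Hs E.
  assert (H4 := gam_pow4 rho EI s). rewrite E in H4. simpl in H4.
  assert (Hrho := RtoC_neq0 rho ltac:(lra)). assert (HEI := RtoC_neq0 EI ltac:(lra)).
  assert (Z : - (RtoC rho * (s * s)) / RtoC EI <> 0).
  { intro Z. apply (RtoC_neq0 1 R1_neq_R0).
    replace (RtoC 1) with ((- (RtoC rho * (s * s)) / RtoC EI) * (- RtoC EI / (RtoC rho * s * s))). 2:{ field. tauto. }
    rewrite Z. ring. }
  apply Z. rewrite <- H4. ring.
Qed.

Definition clamp (a b y : R) : R := Rmax a (Rmin b y).

Lemma clamp_in a b y : (a <= b)%R -> (a <= clamp a b y <= b)%R.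
Proof. intros. unfold clamp, Rmax, Rmin. repeat destruct Rle_dec; lra. Qed.
Lemma clamp_id a b y : (a <= y <= b)%R -> clamp a b y = y.
Proof. intros. unfold clamp, Rmax, Rmin. repeat destruct Rle_dec; lra. Qed.
Lemma clamp_lip a b y z : (a <= b)%R -> (Rabs (clamp a b y - clamp a b z) <= Rabs (y - z))%R.
Proof. intros. unfold clamp, Rmax, Rmin. repeat destruct Rle_dec; unfold Rabs; repeat destruct Rcase_abs; lra. Qed.

Definition wcont (a b : R) (q : R -> R) (x : R) : Prop :=
  forall eps, (0 < eps)%R -> exists d, (0 < d)%R /\
    forall y, (a <= y <= b)%R -> (Rabs (y - x) < d)%R -> (Rabs (q y - q x) < eps)%R.

Lemma cont_clamp (q : R -> R) a b x : (a <= b)%R -> (a <= x <= b)%R -> wcont a b q x ->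
  continuity_pt (fun y => q (clamp a b y)) x.
Proof.
  intros Hab Hx H eps Heps. destruct (H eps Heps) as [d [Hd Hq]].
  exists d. split; [lra|]. intros y [_ Hy]. simpl in *. unfold R_dist in *.
  pose proof (clamp_lip a b y x Hab) as L. rewrite (clamp_id a b x Hx) in *.
  apply Hq. apply clamp_in; auto. lra.
Qed.

Lemma der_clamp (q : R -> R) a b x l : (a < x < b)%R -> derivable_pt_lim q x l ->
  is_derive (fun y => q (clamp a b y)) x l.
Proof.
  intros Hx H. apply is_derive_Reals in H.
  eapply is_derive_ext_loc; [|exact H].
  assert (Hd : (0 < Rmin (x - a) (b - x))%R) by (apply Rmin_pos; lra).
  exists (mkposreal _ Hd). intros y Hy. pose proof (proj1 (ball_R x y _) Hy) as Hy'. simpl in Hy'.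
  assert (Rmin (x - a) (b - x) <= x - a)%R by apply Rmin_l.
  assert (Rmin (x - a) (b - x) <= b - x)%R by apply Rmin_r.
  apply Rabs_def2 in Hy'. rewrite clamp_id; [reflexivity| lra].
Qed.

Lemma dw_wcont a b f x l : is_derive_within a b f x l ->
  wcont a b (fun y => fst (f y)) x /\ wcont a b (fun y => snd (f y)) x.
Proof.
  intros H.
  destruct (H (ball l (mkposreal 1 Rlt_0_1)) (locally_ball l _)) as [d0 Hd0].
  assert (K : forall y, (a <= y <= b)%R -> (Rabs (y - x) < d0)%R ->
     (Rabs (fst (f y) - fst (f x)) <= (Rabs (fst l) + 1) * Rabs (y - x))%R /\
     (Rabs (snd (f y) - snd (f x)) <= (Rabs (snd l) + 1) * Rabs (y - x))%R).
  { intros y Hy Hyd.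
    destruct (Req_dec y x) as [->|Hne].
    { rewrite !Rminus_diag, Rabs_R0. rewrite !Rmult_0_r. lra. }
    assert (HB : ball x d0 y) by (apply ball_R; exact Hyd).
    specialize (Hd0 y HB (conj Hy Hne)).
    pose proof (proj1 (ball_C _ _ _) Hd0) as [H1 H2].
    rewrite Cdiv_RtoC_fst in H1 by lra. rewrite Cdiv_RtoC_snd in H2 by lra. cbn [pos] in H1, H2.
    replace (fst (f y - f x)) with (fst (f y) - fst (f x))%R in H1 by (destruct (f y), (f x); simpl; ring).
    replace (snd (f y - f x)) with (snd (f y) - snd (f x))%R in H2 by (destruct (f y), (f x); simpl; ring).
    assert (Hr : (0 < Rabs (y - x))%R) by (apply Rabs_pos_lt; lra).
    replace (fst (f y) - fst (f x))%R with ((fst (f y) - fst (f x)) / (y - x) * (y - x))%R by (field; lra).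
    replace (snd (f y) - snd (f x))%R with ((snd (f y) - snd (f x)) / (y - x) * (y - x))%R by (field; lra).
    rewrite !Rabs_mult.
    split; apply Rmult_le_compat_r; try lra.
    - pose proof (Rabs_triang_inv ((fst (f y) - fst (f x)) / (y - x)) (fst l)). lra.
    - pose proof (Rabs_triang_inv ((snd (f y) - snd (f x)) / (y - x)) (snd l)). lra. }
  split; intros eps Heps.
  - assert (Hc : (0 < Rabs (fst l) + 1)%R) by (pose proof (Rabs_pos (fst l)); lra).
    exists (Rmin d0 (eps / (Rabs (fst l) + 1))). split.
    { apply Rmin_pos; [apply cond_pos| apply Rdiv_lt_0_compat; lra]. }
    intros y Hy Hyd.
    assert (Rmin d0 (eps / (Rabs (fst l) + 1)) <= d0)%R by apply Rmin_l.
    assert (Rmin d0 (eps / (Rabs (fst l) + 1)) <= eps / (Rabs (fst l) + 1))%R by apply Rmin_r.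
    destruct (K y Hy ltac:(lra)) as [K1 _].
    eapply Rle_lt_trans; [exact K1|].
    apply Rmult_lt_reg_l with (/ (Rabs (fst l) + 1))%R. apply Rinv_0_lt_compat; lra.
    rewrite <- Rmult_assoc, Rinv_l by lra. rewrite Rmult_1_l.
    unfold Rdiv in *. lra.
  - assert (Hc : (0 < Rabs (snd l) + 1)%R) by (pose proof (Rabs_pos (snd l)); lra).
    exists (Rmin d0 (eps / (Rabs (snd l) + 1))). split.
    { apply Rmin_pos; [apply cond_pos| apply Rdiv_lt_0_compat; lra]. }
    intros y Hy Hyd.
    assert (Rmin d0 (eps / (Rabs (snd l) + 1)) <= d0)%R by apply Rmin_l.
    assert (Rmin d0 (eps / (Rabs (snd l) + 1)) <= eps / (Rabs (snd l) + 1))%R by apply Rmin_r.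
    destruct (K y Hy ltac:(lra)) as [_ K1].
    eapply Rle_lt_trans; [exact K1|].
    apply Rmult_lt_reg_l with (/ (Rabs (snd l) + 1))%R. apply Rinv_0_lt_compat; lra.
    rewrite <- Rmult_assoc, Rinv_l by lra. rewrite Rmult_1_l.
    unfold Rdiv in *. lra.
Qed.

Lemma ab2 (x y : R) : (-(x*x + y*y) <= 2*x*y <= x*x + y*y)%R.
Proof. pose proof (Rle_0_sqr (x+y)). pose proof (Rle_0_sqr (x-y)). unfold Rsqr in *. split; nra. Qed.

Lemma energy_bound (u0 v0 u1 v1 u2 v2 u3 v3 l1 l2 s : R) : (s = 1 \/ s = -1)%R ->
  let F := (u0*u0 + v0*v0 + u1*u1 + v1*v1 + u2*u2 + v2*v2 + u3*u3 + v3*v3)%R in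
  let Fd := (2*(u0*u1 + v0*v1 + u1*u2 + v1*v2 + u2*u3 + v2*v3 + u3*(l1*u0 - l2*v0) + v3*(l1*v0 + l2*u0)))%R in
  (s * (Fd - s * (2 + l1*l1 + l2*l2) * F) <= 0)%R.
Proof.
  intros Hs F Fd. unfold F, Fd.
  pose proof (ab2 u0 u1). pose proof (ab2 v0 v1). pose proof (ab2 u1 u2). pose proof (ab2 v1 v2).
  pose proof (ab2 u2 u3). pose proof (ab2 v2 v3).
  pose proof (ab2 u3 (l1*u0 - l2*v0)). pose proof (ab2 v3 (l1*v0 + l2*u0)).
  assert (E : ((l1*u0 - l2*v0)*(l1*u0 - l2*v0) + (l1*v0 + l2*u0)*(l1*v0 + l2*u0) = (l1*l1 + l2*l2)*(u0*u0+v0*v0))%R) by ring.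
  assert (0 <= (l1*l1 + l2*l2)*(v1*v1 + u1*u1 + u2*u2 + v2*v2 + u3*u3 + v3*v3))%R by
    (apply Rmult_le_pos; nra).
  destruct Hs as [-> | ->]; nra.
Qed.

Lemma gronwall_core (a b x0 s K : R) (F Fd : R -> R) : (a < b)%R ->
  ((s = 1 /\ x0 = a) \/ (s = -1 /\ x0 = b))%R ->
  (forall y, (a < y < b)%R -> is_derive F y (Fd y)) ->
  (forall y, (a <= y <= b)%R -> continuous F y) ->
  (forall y, (s * (Fd y - s * K * F y) <= 0)%R) ->
  (forall y, (0 <= F y)%R) -> F x0 = 0%R ->
  forall x, (a <= x <= b)%R -> F x = 0%R.
Proof.
  intros Hab Hs HD HC Hb Hpos H0 x Hx.
  set (G := fun y => (F y * exp (- (s * K * y)))%R).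
  set (Gd := fun y => ((Fd y - s * K * F y) * exp (- (s * K * y)))%R).
  assert (Hx0 : (a <= x0 <= b)%R) by (destruct Hs as [[_ ->]|[_ ->]]; lra).
  assert (Hmin : (a <= Rmin x x0)%R) by (unfold Rmin; destruct Rle_dec; lra).
  assert (Hmax : (Rmax x x0 <= b)%R) by (unfold Rmax; destruct Rle_dec; lra).
  destruct (MVT_gen G x x0 Gd) as [c [Hc HM]].
  - intros y Hy. assert (Hy' : (a < y < b)%R) by lra.
    unfold G, Gd. auto_derive.
    + exists (Fd y). apply HD; auto.
    + rewrite (is_derive_unique (fun x1 : R => F x1) y (Fd y)) by (apply HD; auto). ring.
  - intros y Hy. apply continuity_pt_filterlim. unfold G.
    change (continuous (fun t => F t * exp (-(s*K*t)))%R y).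
    apply (continuous_mult (K:=R_AbsRing)). apply HC. lra.
    apply continuous_exp_comp. apply (continuous_opp (K:=R_AbsRing) (V:=R_NormedModule)).
    apply (continuous_mult (K:=R_AbsRing)). apply continuous_const. apply continuous_id.
  - unfold G in HM. rewrite H0 in HM.
    assert (He : (0 < exp (- (s * K * c)))%R) by apply exp_pos.
    assert (Hex : (0 < exp (- (s * K * x)))%R) by apply exp_pos.
    assert (Hsg : (s * Gd c <= 0)%R).
    { unfold Gd. specialize (Hb c). replace (s * ((Fd c - s * K * F c) * exp (- (s * K * c))))%R
        with ((s * (Fd c - s * K * F c)) * exp (- (s * K * c)))%R by ring.
      apply Rmult_le_0_r; lra. }
    assert (Hsx : (s * (x0 - x) <= 0)%R) by (destruct Hs as [[-> ->]|[-> ->]]; lra).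
    assert (Hss : (s * s = 1)%R) by (destruct Hs as [[-> _]|[-> _]]; lra).
    assert (Hprod : (0 <= Gd c * (x0 - x))%R).
    { replace (Gd c * (x0 - x))%R with ((s * Gd c) * (s * (x0 - x)))%R.
      2: { transitivity ((s * s) * (Gd c * (x0 - x)))%R; [ring| rewrite Hss; ring]. }
      nra. }
    assert (HG : (F x * exp (- (s * K * x)) <= 0)%R) by lra.
    assert (F x <= 0)%R.
    { apply Rmult_le_reg_r with (exp (- (s * K * x))); auto. lra. }
    specialize (Hpos x). lra.
Qed.

Section Energy.
Variables (u v : nat -> R -> R).
Definition EF (t : R) : R :=
  (u 0%nat t * u 0%nat t + v 0%nat t * v 0%nat t + u 1%nat t * u 1%nat t + v 1%nat t * v 1%nat t
   + u 2%nat t * u 2%nat t + v 2%nat t * v 2%nat t + u 3%nat t * u 3%nat t + v 3%nat t * v 3%nat t)%R.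

Lemma EF_deriv y (du dv : nat -> R) :
  (forall k, (k <= 3)%nat -> is_derive (u k) y (du k)) ->
  (forall k, (k <= 3)%nat -> is_derive (v k) y (dv k)) ->
  is_derive EF y (2 * (u 0%nat y * du 0%nat + v 0%nat y * dv 0%nat + u 1%nat y * du 1%nat + v 1%nat y * dv 1%nat
   + u 2%nat y * du 2%nat + v 2%nat y * dv 2%nat + u 3%nat y * du 3%nat + v 3%nat y * dv 3%nat))%R.
Proof.
  intros Hu Hv. unfold EF.
  auto_derive.
  - repeat split; try exact I;
    first [exists (du 0%nat); apply Hu; lia | exists (du 1%nat); apply Hu; lia
          | exists (du 2%nat); apply Hu; lia | exists (du 3%nat); apply Hu; lia
          | exists (dv 0%nat); apply Hv; lia | exists (dv 1%nat); apply Hv; lia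
          | exists (dv 2%nat); apply Hv; lia | exists (dv 3%nat); apply Hv; lia].
  - rewrite (is_derive_unique (fun x : R => u 0%nat x) y (du 0%nat)) by (apply Hu; lia).
    rewrite (is_derive_unique (fun x : R => u 1%nat x) y (du 1%nat)) by (apply Hu; lia).
    rewrite (is_derive_unique (fun x : R => u 2%nat x) y (du 2%nat)) by (apply Hu; lia).
    rewrite (is_derive_unique (fun x : R => u 3%nat x) y (du 3%nat)) by (apply Hu; lia).
    rewrite (is_derive_unique (fun x : R => v 0%nat x) y (dv 0%nat)) by (apply Hv; lia).
    rewrite (is_derive_unique (fun x : R => v 1%nat x) y (dv 1%nat)) by (apply Hv; lia).
    rewrite (is_derive_unique (fun x : R => v 2%nat x) y (dv 2%nat)) by (apply Hv; lia).
    rewrite (is_derive_unique (fun x : R => v 3%nat x) y (dv 3%nat)) by (apply Hv; lia).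
    ring.
Qed.

Lemma EF_cont y : (forall k, (k <= 3)%nat -> continuous (u k) y) ->
  (forall k, (k <= 3)%nat -> continuous (v k) y) -> continuous EF y.
Proof.
  intros Hu Hv. unfold EF.
  repeat match goal with
  | |- continuous (fun t => (_ + _)%R) _ => apply (continuous_plus (K:=R_AbsRing) (V:=R_NormedModule))
  | |- continuous (fun t => (_ * _)%R) _ => apply (continuous_mult (K:=R_AbsRing))
  | |- continuous (fun t => u _ t) _ => apply Hu; lia
  | |- continuous (fun t => v _ t) _ => apply Hv; lia
  | |- continuous (u _) _ => apply Hu; lia
  | |- continuous (v _) _ => apply Hv; lia
  end.
Qed.

Lemma EF_pos y : (0 <= EF y)%R.
Proof.
  unfold EF.
  pose proof (Rle_0_sqr (u 0%nat y)). pose proof (Rle_0_sqr (u 1%nat y)).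
  pose proof (Rle_0_sqr (u 2%nat y)). pose proof (Rle_0_sqr (u 3%nat y)).
  pose proof (Rle_0_sqr (v 0%nat y)). pose proof (Rle_0_sqr (v 1%nat y)).
  pose proof (Rle_0_sqr (v 2%nat y)). pose proof (Rle_0_sqr (v 3%nat y)).
  unfold Rsqr in *. lra.
Qed.
End Energy.

Lemma uniq (a b : R) (lam : C) (E : nat -> R -> C) (x0 : R) :
  (a < b)%R -> (x0 = a \/ x0 = b)%R ->
  (forall k x, (k <= 3)%nat -> (a <= x <= b)%R -> exists l, is_derive_within a b (E k) x l) ->
  (forall k x, (k < 3)%nat -> (a < x < b)%R -> is_derive_within a b (E k) x (E (S k) x)) ->
  (forall x, (a < x < b)%R -> is_derive_within a b (E 3%nat) x (lam * E 0%nat x)) ->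
  (forall k, (k <= 3)%nat -> E k x0 = 0) ->
  forall x, (a <= x <= b)%R -> forall k, (k <= 3)%nat -> E k x = 0.
Proof.
  intros Hab Hx0 Hex Hd Hd3 H0 x Hx k Hk.
  pose (u := fun k t => fst (E k (clamp a b t))).
  pose (v := fun k t => snd (E k (clamp a b t))).
  pose (l1 := fst lam). pose (l2 := snd lam).
  assert (Hs : exists s, ((s = 1 /\ x0 = a) \/ (s = -1 /\ x0 = b))%R).
  { destruct Hx0; [exists 1%R | exists (-1)%R]; auto. }
  destruct Hs as [s Hs].
  pose (Fd := fun t => (2*(u 0%nat t * u 1%nat t + v 0%nat t * v 1%nat t + u 1%nat t * u 2%nat t + v 1%nat t * v 2%nat t
      + u 2%nat t * u 3%nat t + v 2%nat t * v 3%nat t + u 3%nat t * (l1 * u 0%nat t - l2 * v 0%nat t)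
      + v 3%nat t * (l1 * v 0%nat t + l2 * u 0%nat t)))%R).
  assert (Hx0' : (a <= x0 <= b)%R) by (destruct Hx0; subst; lra).
  assert (HF : EF u v x = 0%R).
  { apply (gronwall_core a b x0 s (2 + l1*l1 + l2*l2) (EF u v) Fd Hab Hs); auto.
    - intros y Hy.
      assert (Hcl : clamp a b y = y) by (apply clamp_id; lra).
      assert (DU : forall k, (k <= 3)%nat -> exists dl : C, is_derive_within a b (E k) y dl /\
         ((k < 3)%nat -> dl = E (S k) y) /\ ((k = 3)%nat -> dl = lam * E 0%nat y)).
      { intros j Hj. destruct (Nat.lt_ge_cases j 3).
        - exists (E (S j) y). split; [apply Hd; auto|]. split; auto. intros; lia.
        - exists (lam * E 0%nat y). assert (j = 3)%nat by lia. subst. split; [apply Hd3; auto|].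
          split; auto. intros; lia. }
      set (du := fun j => match j with 0 => u 1%nat y | 1 => u 2%nat y | 2 => u 3%nat y | _ => (l1 * u 0%nat y - l2 * v 0%nat y)%R end).
      set (dv := fun j => match j with 0 => v 1%nat y | 1 => v 2%nat y | 2 => v 3%nat y | _ => (l1 * v 0%nat y + l2 * u 0%nat y)%R end).
      replace (Fd y) with (2 * (u 0%nat y * du 0%nat + v 0%nat y * dv 0%nat + u 1%nat y * du 1%nat + v 1%nat y * dv 1%nat
        + u 2%nat y * du 2%nat + v 2%nat y * dv 2%nat + u 3%nat y * du 3%nat + v 3%nat y * dv 3%nat))%R
        by (unfold Fd, du, dv; ring).
      apply EF_deriv.
      + intros j Hj. destruct (DU j Hj) as [dl [Hdl [Hl1 Hl2]]].
        destruct (components_of_dw a b (E j) y dl ltac:(lra) Hdl) as [C1 C2].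
        apply (der_clamp (fun t => fst (E j t)) a b y) in C1; [|lra].
        replace (du j) with (fst dl); [exact C1|].
        unfold du, u, v. rewrite Hcl.
        destruct j as [|[|[|[|j]]]]; try lia.
        * rewrite Hl1 by lia. reflexivity.
        * rewrite Hl1 by lia. reflexivity.
        * rewrite Hl1 by lia. reflexivity.
        * rewrite Hl2 by lia. unfold l1, l2. destruct lam, (E 0%nat y). simpl. ring.
      + intros j Hj. destruct (DU j Hj) as [dl [Hdl [Hl1 Hl2]]].
        destruct (components_of_dw a b (E j) y dl ltac:(lra) Hdl) as [C1 C2].
        apply (der_clamp (fun t => snd (E j t)) a b y) in C2; [|lra].
        replace (dv j) with (snd dl); [exact C2|].
        unfold dv, v, u. rewrite Hcl.
        destruct j as [|[|[|[|j]]]]; try lia.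
        * rewrite Hl1 by lia. reflexivity.
        * rewrite Hl1 by lia. reflexivity.
        * rewrite Hl1 by lia. reflexivity.
        * rewrite Hl2 by lia. unfold l1, l2. destruct lam, (E 0%nat y). simpl. ring.
    - intros y Hy. apply EF_cont.
      + intros j Hj. destruct (Hex j y Hj Hy) as [dl Hdl].
        apply (proj1 (continuity_pt_filterlim _ _)). apply (cont_clamp (fun t => fst (E j t))); [lra|auto|].
        apply (dw_wcont a b (E j) y dl Hdl).
      + intros j Hj. destruct (Hex j y Hj Hy) as [dl Hdl].
        apply (proj1 (continuity_pt_filterlim _ _)). apply (cont_clamp (fun t => snd (E j t))); [lra|auto|].
        apply (dw_wcont a b (E j) y dl Hdl).
    - intros y. apply energy_bound. destruct Hs as [[-> _]|[-> _]]; auto.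
    - intros y. apply EF_pos.
    - unfold EF, u, v. rewrite clamp_id by auto.
      rewrite !H0 by lia. simpl. ring. }
  unfold EF, u, v in HF. rewrite clamp_id in HF by auto.
  pose proof (Rle_0_sqr (fst (E 0%nat x))). pose proof (Rle_0_sqr (fst (E 1%nat x))).
  pose proof (Rle_0_sqr (fst (E 2%nat x))). pose proof (Rle_0_sqr (fst (E 3%nat x))).
  pose proof (Rle_0_sqr (snd (E 0%nat x))). pose proof (Rle_0_sqr (snd (E 1%nat x))).
  pose proof (Rle_0_sqr (snd (E 2%nat x))). pose proof (Rle_0_sqr (snd (E 3%nat x))).
  unfold Rsqr in *.
  assert (Z : forall r, (0 <= r * r)%R -> (r * r <= 0)%R -> r = 0%R).
  { intros r _ Hr. apply Rsqr_0_uniq. unfold Rsqr. pose proof (Rle_0_sqr r). unfold Rsqr in *. lra. }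
  destruct k as [|[|[|[|k]]]]; try lia.
  all: apply injective_projections; simpl; apply Z; auto; lra.
Qed.

Lemma lin_solve (M N : nat -> nat -> C) (x1 x2 x3 x4 r : C) :
  is_inverse4 M N ->
  M 1%nat 1%nat * x1 + M 1%nat 2%nat * x2 + M 1%nat 3%nat * x3 + M 1%nat 4%nat * x4 = 0 ->
  M 2%nat 1%nat * x1 + M 2%nat 2%nat * x2 + M 2%nat 3%nat * x3 + M 2%nat 4%nat * x4 = 0 ->
  M 3%nat 1%nat * x1 + M 3%nat 2%nat * x2 + M 3%nat 3%nat * x3 + M 3%nat 4%nat * x4 = 0 ->
  M 4%nat 1%nat * x1 + M 4%nat 2%nat * x2 + M 4%nat 3%nat * x3 + M 4%nat 4%nat * x4 = r ->
  x1 = N 1%nat 4%nat * r /\ x2 = N 2%nat 4%nat * r /\ x3 = N 3%nat 4%nat * r /\ x4 = N 4%nat 4%nat * r.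
Proof.
  intros H R1 R2 R3 R4.
  assert (K : forall i, (1 <= i <= 4)%nat ->
    mul4 N M i 1%nat * x1 + mul4 N M i 2%nat * x2 + mul4 N M i 3%nat * x3 + mul4 N M i 4%nat * x4 = N i 4%nat * r).
  { intros i Hi. rewrite <- R4.
    replace (mul4 N M i 1%nat * x1 + mul4 N M i 2%nat * x2 + mul4 N M i 3%nat * x3 + mul4 N M i 4%nat * x4)
     with (N i 1%nat * (M 1%nat 1%nat * x1 + M 1%nat 2%nat * x2 + M 1%nat 3%nat * x3 + M 1%nat 4%nat * x4)
         + N i 2%nat * (M 2%nat 1%nat * x1 + M 2%nat 2%nat * x2 + M 2%nat 3%nat * x3 + M 2%nat 4%nat * x4)
         + N i 3%nat * (M 3%nat 1%nat * x1 + M 3%nat 2%nat * x2 + M 3%nat 3%nat * x3 + M 3%nat 4%nat * x4)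
         + N i 4%nat * (M 4%nat 1%nat * x1 + M 4%nat 2%nat * x2 + M 4%nat 3%nat * x3 + M 4%nat 4%nat * x4))
     by (unfold mul4; ring).
    rewrite R1, R2, R3. ring. }
  assert (D : forall i j, (1 <= i <= 4)%nat -> (1 <= j <= 4)%nat -> mul4 N M i j = if Nat.eqb i j then 1 else 0)
    by (intros; apply H; auto).
  repeat split.
  - rewrite <- (K 1%nat) by lia. rewrite !D by lia. simpl. ring.
  - rewrite <- (K 2%nat) by lia. rewrite !D by lia. simpl. ring.
  - rewrite <- (K 3%nat) by lia. rewrite !D by lia. simpl. ring.
  - rewrite <- (K 4%nat) by lia. rewrite !D by lia. simpl. ring.
Qed.

Lemma dw_minus a b f h x l1 l2 : is_derive_within a b f x l1 -> is_derive_within a b h x l2 ->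
  is_derive_within a b (fun y => f y - h y) x (l1 - l2).
Proof.
  intros Hf Hh. eapply dw_ext. { intro y. instantiate (1 := fun y => f y + (-1) * h y). simpl. ring. }
  replace (l1 - l2) with (l1 + (-1) * l2) by ring.
  apply dw_plus; auto. apply dw_scal; auto.
Qed.

Definition Yf (g al be : C) (sh : R) (k : nat) (x : R) : C :=
  match k with
  | 0%nat => al * zt2 g (x - sh) + be * zt4 g (x - sh)
  | 1%nat => al * zt1 g (x - sh) + be * zt3 g (x - sh)
  | 2%nat => al * (Cpow g 4 * zt4 g (x - sh)) + be * zt2 g (x - sh)
  | _ => al * (Cpow g 4 * zt3 g (x - sh)) + be * zt1 g (x - sh)
  end.

Lemma dw_Y (a b : R) (g al be : C) (sh x : R) (Hg : g <> 0) : forall k, (k < 3)%nat ->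
  is_derive_within a b (Yf g al be sh k) x (Yf g al be sh (S k) x).
Proof.
  intros k Hk. destruct k as [|[|[|k]]]; try lia; simpl.
  - apply dw_plus; apply dw_scal; [apply dw_zt2 | apply dw_zt4]; auto.
  - apply dw_plus; apply dw_scal; [apply dw_zt1 | apply dw_zt3]; auto.
  - apply dw_plus; apply dw_scal; [apply dw_scal; apply dw_zt4 | apply dw_zt2]; auto.
Qed.

Lemma dw_Y3 (a b : R) (g al be : C) (sh x : R) (Hg : g <> 0) :
  is_derive_within a b (Yf g al be sh 3%nat) x (Cpow g 4 * Yf g al be sh 0%nat x).
Proof.
  simpl. replace (g * (g * (g * (g * 1))) * (al * zt2 g (x - sh) + be * zt4 g (x - sh)))
    with (al * (g * (g * (g * (g * 1))) * zt2 g (x - sh)) + be * (g * (g * (g * (g * 1))) * zt4 g (x - sh))) by ring.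
  apply dw_plus; apply dw_scal; [apply dw_scal; apply dw_zt3 | apply (dw_zt1 a b g sh Hg)]; auto.
Qed.

Lemma Cexp_0 : Cexp 0 = 1.
Proof. unfold Cexp. simpl. rewrite exp_0, cos_0, sin_0. apply injective_projections; simpl; ring. Qed.

Lemma zt_at0 (g : C) : g <> 0 -> zt1 g 0%R = 2 /\ zt2 g 0%R = 0 /\ zt3 g 0%R = 0 /\ zt4 g 0%R = 0.
Proof.
  intros Hg.
  assert (E0 : g * RtoC 0 = 0) by ring.
  assert (E1 : Ci * (g * RtoC 0) = 0) by (rewrite E0; ring).
  unfold zt1, zt2, zt3, zt4, Ccosh, Csinh, Ccos, Csin. rewrite E1, E0.
  replace (-0 : C) with (0 : C) by ring. rewrite Cexp_0.
  assert (Ci <> 0). { intro H. apply (f_equal snd) in H. simpl in H. lra. }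
  repeat split; field; auto.
Qed.


Lemma piece (a b x0 : R) (g al be : C) (sh : R) (Wk : nat -> R -> C) :
  (a < b)%R -> (x0 = a \/ x0 = b)%R -> g <> 0 ->
  (forall k x, (k < 4)%nat -> (a <= x <= b)%R -> is_derive_within a b (Wk k) x (Wk (S k) x)) ->
  (forall x, (a < x < b)%R -> Wk 4%nat x = Cpow g 4 * Wk 0%nat x) ->
  (forall k, (k <= 3)%nat -> Wk k x0 = Yf g al be sh k x0) ->
  forall x, (a <= x <= b)%R -> forall k, (k <= 3)%nat -> Wk k x = Yf g al be sh k x.
Proof.
  intros Hab Hx0 Hg HD Hode H0 x Hx k Hk.
  assert (Z : Wk k x - Yf g al be sh k x = 0).
  { apply (uniq a b (Cpow g 4) (fun k x => Wk k x - Yf g al be sh k x) x0 Hab Hx0); auto.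
    - intros j y Hj Hy. cbv beta. destruct (Nat.lt_ge_cases j 3).
      + eexists. apply dw_minus; [apply HD; [lia | lra] | apply dw_Y; auto].
      + assert (j = 3%nat) by lia. subst. eexists. apply dw_minus; [apply HD; [lia | lra] | apply dw_Y3; auto].
    - intros j y Hj Hy. cbv beta. apply dw_minus; [apply HD; [lia | lra] | apply dw_Y; auto].
    - intros y Hy. cbv beta.
      replace (Cpow g 4 * (Wk 0%nat y - Yf g al be sh 0 y)) with (Wk 4%nat y - Cpow g 4 * Yf g al be sh 0 y)
        by (rewrite Hode by auto; ring).
      apply dw_minus; [apply HD; [lia | lra] | apply dw_Y3; auto].
    - intros j Hj. cbv beta. rewrite H0 by auto. ring. }
  rewrite <- (Cplus_0_r (Yf g al be sh k x)). rewrite <- Z. ring.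
Qed.

Lemma RtoC_div' (x y : R) : y <> 0%R -> RtoC (x / y) = RtoC x / RtoC y.
Proof. intros H. unfold Cdiv, Cinv, Cmult, RtoC. simpl. apply injective_projections; simpl; field; auto. Qed.

Theorem proposition2
  (l l0 rho EI m kap d : R)
  (Hl : (0 < l)%R) (Hl0 : (0 < l0 < l)%R) (Hrho : (0 < rho)%R) (HEI : (0 < EI)%R)
  (Hm : (0 < m)%R) (Hkap : (0 < kap)%R) (Hd : (0 < d)%R)
  (s : C) (Hs : s <> 0)
  (Minv : nat -> nat -> C) (HMinv : is_inverse4 (Mt l l0 rho EI m kap d s) Minv)
  (U : C) (W : R -> C) (W1 W2 : nat -> R -> C)
  (HW1 : Cn_on 4 0 l0 W W1) (HW2 : Cn_on 4 l0 l W W2)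
  (Hode1 : forall x, (0 < x < l0)%R -> s * s * W x + RtoC (EI / rho) * W1 4%nat x = 0)
  (Hode2 : forall x, (l0 < x < l)%R -> s * s * W x + RtoC (EI / rho) * W2 4%nat x = 0)
  (Hbc0 : W 0%R = 0) (Hbcl : W l = 0)
  (Hbc0' : W1 2%nat 0%R = 0) (Hbcl' : W2 2%nat l = 0)
  (Hint : forall j, (j <= 2)%nat -> W1 j l0 = W2 j l0)
  (Hmass : (RtoC m * (s * s) + RtoC d * s + RtoC kap) * W l0
           = RtoC EI * (W1 3%nat l0 - W2 3%nat l0) + U)
  (lk : R) (Hlk : (0 <= lk <= l)%R) :
  W lk = Ht1 l l0 rho EI s Minv lk * U /\
  (if Rle_dec lk l0 then W1 2%nat lk else W2 2%nat lk) = Ht2 l l0 rho EI s Minv lk * U.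
Proof.
  assert (Hg : gam rho EI s <> 0) by (apply gam_neq0; auto).
  assert (Hlam := gam_pow4 rho EI s).
  assert (HrhoC : RtoC rho <> 0) by (apply RtoC_neq0; lra).
  assert (HEIC : RtoC EI <> 0) by (apply RtoC_neq0; lra).
  set (g := gam rho EI s) in *.
  destruct HW1 as [W1_0 [W1_d _]]. destruct HW2 as [W2_0 [W2_d _]].
  destruct (zt_at0 g Hg) as [z1 [z2 [z3 z4]]].
  set (al := W1 1%nat 0%R / 2). set (be := W1 3%nat 0%R / 2).
  set (al' := W2 1%nat l / 2). set (be' := W2 3%nat l / 2).
  assert (ODE : forall (Wk : nat -> R -> C) x, s * s * W x + RtoC (EI / rho) * Wk 4%nat x = 0 ->
     Wk 0%nat x = W x -> Wk 4%nat x = Cpow g 4 * Wk 0%nat x).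
  { intros Wk x E E0. rewrite E0, Hlam. rewrite RtoC_div' in E by lra.
    replace (Wk 4%nat x) with ((s*s*W x + (RtoC EI/RtoC rho) * Wk 4%nat x) * (RtoC rho/RtoC EI) - s*s*W x*(RtoC rho/RtoC EI))
      by (field; split; auto).
    rewrite E. field. auto. }
  assert (P1 : forall x, (0 <= x <= l0)%R -> forall k, (k <= 3)%nat -> W1 k x = Yf g al be 0 k x).
  { apply (piece 0 l0 0 g al be 0 W1); auto; try lra.
    - intros x Hx. apply ODE; [apply Hode1; auto | apply W1_0; lra].
    - intros k Hk.
      destruct k as [|[|[|[|k]]]]; try lia; simpl; replace (0 - 0)%R with 0%R by ring; rewrite ?z1, ?z2, ?z3, ?z4; unfold al, be.
      + rewrite W1_0 by lra. rewrite Hbc0. ring.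
      + field.
      + rewrite Hbc0'. ring.
      + field. }
  assert (P2 : forall x, (l0 <= x <= l)%R -> forall k, (k <= 3)%nat -> W2 k x = Yf g al' be' l k x).
  { apply (piece l0 l l g al' be' l W2); auto; try lra.
    - intros x Hx. apply ODE; [apply Hode2; auto | apply W2_0; lra].
    - intros k Hk.
      destruct k as [|[|[|[|k]]]]; try lia; simpl; replace (l - l)%R with 0%R by ring; rewrite ?z1, ?z2, ?z3, ?z4; unfold al', be'.
      + rewrite W2_0 by lra. rewrite Hbcl. ring.
      + field.
      + rewrite Hbcl'. ring.
      + field. }
  assert (Hl0a : (0 <= l0 <= l0)%R) by lra. assert (Hl0b : (l0 <= l0 <= l)%R) by lra.
  assert (C0 : Yf g al be 0 0 l0 = Yf g al' be' l 0 l0).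
  { rewrite <- P1, <- P2 by (auto; lia). apply Hint. lia. }
  assert (C1 : Yf g al be 0 1 l0 = Yf g al' be' l 1 l0).
  { rewrite <- P1, <- P2 by (auto; lia). apply Hint. lia. }
  assert (C2 : Yf g al be 0 2 l0 = Yf g al' be' l 2 l0).
  { rewrite <- P1, <- P2 by (auto; lia). apply Hint. lia. }
  assert (C3 : (RtoC m * (s * s) + RtoC d * s + RtoC kap) / RtoC EI * Yf g al be 0 0 l0
       - Yf g al be 0 3 l0 + Yf g al' be' l 3 l0 = / RtoC EI * U).
  { rewrite <- !P1, <- P2 by (auto; lia). rewrite W1_0 by lra.
    replace U with ((RtoC m * (s * s) + RtoC d * s + RtoC kap) * W l0 - RtoC EI * (W1 3%nat l0 - W2 3%nat l0))
      by (rewrite Hmass; ring).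
    field. auto. }
  simpl in C0, C1, C2, C3. rewrite Rminus_0_r in C0, C1, C2, C3.
  destruct (lin_solve (Mt l l0 rho EI m kap d s) Minv al be al' be' (/ RtoC EI * U) HMinv)
    as [Hal [Hbe [Hal' Hbe']]].
  all: try (unfold Mt; cbv beta zeta iota; fold g).
  - match type of C0 with ?A = ?B => transitivity (A - B); [simpl; ring | rewrite C0; ring] end.
  - match type of C1 with ?A = ?B => transitivity (A - B); [simpl; ring | rewrite C1; ring] end.
  - match type of C2 with ?A = ?B => transitivity (A - B); [simpl; ring | rewrite C2; ring] end.
  - match type of C3 with ?A = ?B => transitivity A; [simpl; ring | exact C3] end.
  - unfold Ht1, Ht2. cbv zeta. fold g.
    destruct (Rle_dec lk l0) as [Hle|Hgt].
    + assert (Hx : (0 <= lk <= l0)%R) by lra.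
      rewrite <- (W1_0 lk Hx). rewrite !P1 by (auto; lia). simpl. rewrite Rminus_0_r.
      fold al be in Hal, Hbe. rewrite Hal, Hbe. split; ring.
    + assert (Hx : (l0 <= lk <= l)%R) by lra.
      rewrite <- (W2_0 lk Hx). rewrite !P2 by (auto; lia). simpl.
      rewrite Hal', Hbe'. split; ring.
Qed.
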